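(* Let $\pi\in\mathcal{S}_n$ be an arbitrary permutation. (a) For every $r\ge0$ and every $(i,j)\in\mathcal{E}_r(\pi)$ we have $i+j\le n+r$. (b) Let $(i,j)\in D(\pi)$ be a diagram square of rank $1$ such that $(i-1,j)\notin D(\pi)$ and $(i,j-1)\notin D(\pi)$. Then $\pi_{i-1}=j-1$. Furthermore, for any $(i,j)\in\mathcal{E}_1(\pi)$ there is no $(i',j')\in\mathcal{E}(\pi)$ with $i'<i$ and $j'<j$.
   Context: Represent $\pi\in\mathcal{S}_n$ by an $n\times n$ array, rows $i=1,\dots,n$ numbered top to bottom and columns $j=1,\dots,n$ left to right, with a dot in square $(i,\pi_i)$. The diagram $D(\pi)$ is the set of squares $(i,j)$ with $\pi_i>j$ and $\pi^{-1}(j)>i$; its elements are diagram squares. The essential set $\mathcal{E}(\pi)$ is the set of $(i,j)\in D(\pi)$ with $(i+1,j)\notin D(\pi)$ and $(i,j+1)\notin D(\pi)$ (squares outside the array count as not in $D(\pi)$). The rank of a square $(i,j)$ is $\rho(i,j)=\#\{k<i:\pi_k<j\}$ (number of dots strictly northwest), and $\mathcal{E}_r(\pi)=\{(i,j)\in\mathcal{E}(\pi):\rho(i,j)=r\}$. *)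

(* Defs.v *)
From mathcomp Require Import all_boot all_fingroup.
Set Implicit Arguments. Unset Strict Implicit. Unset Printing Implicit Defensive.

(* Conventions: rows/columns and values are 1-based natural numbers, as in the
   paper.  A permutation s : 'S_n acts on 'I_n = {0,..,n-1}; we set
   pi s i := (s (i-1)) + 1 for 1 <= i <= n (and 0 outside that range). *)

Definition pv n (s : 'S_n) (i : nat) : nat :=
  if 0 < i then
    match (insub i.-1 : option 'I_n) with Some k => (s k).+1 | None => 0 end
  else 0.

Definition pinv n (s : 'S_n) (j : nat) : nat := pv (s^-1)%g j.

Definition inD n (s : 'S_n) (i j : nat) : bool :=
  [&& 0 < i <= n, 0 < j <= n, j < pv s i & i < pinv s j].

Definition essential n (s : 'S_n) (i j : nat) : bool :=
  [&& inD s i j, ~~ inD s i.+1 j & ~~ inD s i j.+1].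

Definition rk n (s : 'S_n) (i j : nat) : nat :=
  count (fun k => pv s k < j) (iota 1 i.-1).

(* Main.v *)
Require Import Defs.
From mathcomp Require Import all_boot all_fingroup.
From mathcomp Require Import zify.
Set Implicit Arguments. Unset Strict Implicit. Unset Printing Implicit Defensive.

Lemma pv_ord n (s : 'S_n) (k : 'I_n) : pv s k.+1 = (s k).+1.
Proof. by rewrite /pv /= valK. Qed.

Section Aux.
Variables (n : nat) (s : 'S_n).

Lemma ord_of i : 0 < i <= n -> exists k : 'I_n, i = k.+1.
Proof.
move=> /andP[h1 h2]; have hk : i.-1 < n by lia.
exists (Ordinal hk) => /=; lia.
Qed.

Lemma pv_bound i : 0 < i <= n -> 0 < pv s i <= n.
Proof. move=> /ord_of[k ->]; rewrite pv_ord; have := ltn_ord (s k); lia. Qed.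

Lemma pinv_bound j : 0 < j <= n -> 0 < pinv s j <= n.
Proof. move=> /ord_of[k ->]; rewrite /pinv pv_ord; have := ltn_ord ((s^-1)%g k); lia. Qed.

Lemma pvK i : 0 < i <= n -> pinv s (pv s i) = i.
Proof. by move=> /ord_of[k ->]; rewrite pv_ord /pinv pv_ord permK. Qed.

Lemma pinvK j : 0 < j <= n -> pv s (pinv s j) = j.
Proof. by move=> /ord_of[k ->]; rewrite /pinv pv_ord pv_ord permKV. Qed.

Lemma pinv_inj a b : 0 < a <= n -> 0 < b <= n -> pinv s a = pinv s b -> a = b.
Proof. by move=> ha hb e; rewrite -(pinvK ha) -(pinvK hb) e. Qed.
End Aux.

Lemma two_count (P : pred nat) (l : seq nat) a b :
  uniq l -> a \in l -> b \in l -> a != b -> P a -> P b -> 1 < count P l.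
Proof.
move=> ul al bl ab Pa Pb; rewrite -size_filter.
have -> : 2 = size [:: a; b] by [].
apply: uniq_leq_size; first by rewrite /= inE ab.
by move=> x; rewrite !inE mem_filter => /orP[] /eqP ->; rewrite ?Pa ?Pb.
Qed.

Theorem lemma2p2 (n : nat) (s : 'S_n) :
  (forall (r i j : nat), essential s i j -> rk s i j = r -> i + j <= n + r) /\
  (forall i j : nat, inD s i j -> rk s i j = 1 ->
     ~~ inD s i.-1 j -> ~~ inD s i j.-1 -> pv s i.-1 = j.-1) /\
  (forall i j : nat, essential s i j -> rk s i j = 1 ->
     ~ (exists i' j' : nat, [&& essential s i' j', i' < i & j' < j])).
Proof.
split; [|split].
- move=> r i j /and3P[/and4P[/andP[i0 iN] /andP[j0 jN] jpi ipj] _ _] <-.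
  set S := iota 1 j.-1.
  pose p := fun v => pinv s v < i.
  have inS v : v \in S -> 0 < v <= n /\ v < j.
    by rewrite mem_iota; lia.
  have H1 : count p S <= rk s i j.
    rewrite -size_filter -(size_map (pinv s)) /rk -size_filter.
    apply: uniq_leq_size.
      rewrite map_inj_in_uniq ?filter_uniq ?iota_uniq //.
      move=> a b; rewrite !mem_filter => /andP[_ /inS[ha _]] /andP[_ /inS[hb _]].
      exact: pinv_inj.
    move=> x /mapP[v]; rewrite mem_filter => /andP[pv' /inS[hv vj]] ->.
    rewrite mem_filter pinvK // vj /= mem_iota.
    have := pinv_bound s hv; rewrite /p /= in pv'; lia.
  have jpj := pinv_bound s (j:=j); have := jpj ltac:(lia) => bj.
  have H2 : count (predC p) S + 1 <= n - i.
    rewrite -size_filter -(size_map (pinv s)).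
    have -> : n - i = size (iota i.+1 (n - i)) by rewrite size_iota.
    have -> : size (map (pinv s) (filter (predC p) S)) + 1 =
      size (map (pinv s) (filter (predC p) S) ++ [:: pinv s j]) by rewrite size_cat.
    apply: uniq_leq_size.
      rewrite cat_uniq /= andbT map_inj_in_uniq ?filter_uniq ?iota_uniq //=.
        rewrite orbF; apply/negP=> /mapP[v]; rewrite mem_filter => /andP[_ /inS[hv vj]] e.
        have := pinv_inj hv (ltac:(lia) : 0 < j <= n) (esym e); lia.
      move=> a b; rewrite !mem_filter => /andP[_ /inS[ha _]] /andP[_ /inS[hb _]].
      exact: pinv_inj.
    move=> x; rewrite mem_cat inE => /orP[/mapP[v]|/eqP ->]; last by rewrite mem_iota; lia.
    rewrite mem_filter => /andP[pv' /inS[hv vj]] ->.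
    rewrite /p /= -leqNgt in pv'.
    have := pinv_bound s hv; rewrite mem_iota.
    have : pinv s v != i.
      apply/eqP=> e; have := pinvK s hv; rewrite e; lia.
    lia.
  have := count_predC p S; rewrite size_iota; lia.
- move=> i j /and4P[/andP[i0 iN] /andP[j0 jN] jpi ipj] r1 nD1 nD2.
  have i2 : 1 < i.
    case: i i0 r1 {iN jpi ipj nD1 nD2} => [|[|i]] //.
  have hi1 : 0 < i.-1 <= n by lia.
  move: nD1; rewrite /inD hi1 j0 jN /= => nD1.
  have lt1 : pv s i.-1 < j.
    have : pv s i.-1 != j.
      apply/eqP=> e; have := pvK s hi1; rewrite e; lia.
    move: nD1; rewrite (_ : i.-1 < pinv s j) ?andbT; last by lia.
    lia.
  have := pv_bound s hi1 => b1.
  have hj1 : 0 < j.-1 <= n by lia.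
  move: nD2; rewrite /inD i0 iN hj1 /= (_ : j.-1 < pv s i) /=; last by lia.
  rewrite -leqNgt => c.
  have ci : pinv s j.-1 != i.
    apply/eqP=> e; have := pinvK s hj1; rewrite e; lia.
  have := pinv_bound s hj1 => bc.
  have := pinvK s hj1 => ec.
  case: (eqVneq (pinv s j.-1) i.-1) => [<-|ne]; first by rewrite ec.
  have : 1 < rk s i j.
    apply: (@two_count _ _ (pinv s j.-1) i.-1); rewrite ?iota_uniq ?mem_iota //=;
      try lia.
  lia.
- move=> i j /and3P[/and4P[/andP[i0 iN] /andP[j0 jN] jpi ipj] _ _] r1.
  case=> i' [j'] /and3P[/and3P[/and4P[/andP[i'0 i'N] /andP[j'0 j'N] jpi' ipj'] n1 n2] ii jj].
  have hi' : 0 < i'.+1 <= n by lia.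
  have hj' : 0 < j'.+1 <= n by lia.
  move: n1; rewrite /inD hi' j'0 j'N /= => n1.
  have a1 : pv s i'.+1 <= j'.
    rewrite leqNgt; apply/negP=> h; move: n1; rewrite h /= => n1.
    have e : pinv s j' = i'.+1 by lia.
    have := pinvK s (j:=j') ltac:(lia); rewrite e; lia.
  move: n2; rewrite /inD i'0 i'N hj' /= => n2.
  have a2 : pinv s j'.+1 <= i'.
    rewrite leqNgt; apply/negP=> h; move: n2; rewrite h andbT => n2.
    have e : pv s i' = j'.+1 by lia.
    have := pvK s (i:=i') ltac:(lia); rewrite e; lia.
  have := pv_bound s hi' => b1.
  have := pinv_bound s hj' => b2.
  have := pinvK s hj' => e2.
  have ne1 : i'.+1 != i by apply/eqP=> e; move: a1; rewrite e; lia.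
  have ne2 : j'.+1 != j by apply/eqP=> e; move: a2; rewrite -e in ipj; lia.
  have : 1 < rk s i j.
    apply: (@two_count _ _ (pinv s j'.+1) i'.+1); rewrite ?iota_uniq ?mem_iota //=;
      try lia.
  lia.
Qed.
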